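(* Let $G$ be a line graph, let $D^*$ be a minimal dominating set of $G$, let $v$ be an isolated vertex of $G[D^*]$, and let $u$ be a neighbor of $v$. Write $\{x_1,\ldots,x_k\}=P_{D^*}(v)\setminus N[u]$ and $U=N[u]\cup\bigcup_{i=1}^k\big((N[x_i]\setminus N[v])\cup\{x_i\}\big)$. Then for any set $Z=\{z_1,\ldots,z_k\}$ with $z_i\in N(x_i)\setminus N[v]$ for each $i\in\{1,\ldots,k\}$, we have $U\subseteq N[Z\cup\{u\}]$.
   Context: Graphs are finite, simple, undirected; $N(x)$ is the open and $N[x]=N(x)\cup\{x\}$ the closed neighborhood, $N[S]=\bigcup_{x\in S}N[x]$. A line graph is a graph isomorphic to $L(H)$ for some graph $H$ ($L(H)$ has vertex set $E(H)$, adjacency = sharing an endpoint). A dominating set is $D\subseteq V(G)$ with $N[D]=V(G)$; minimal if no proper subset is dominating. For a dominating set $D$ and $x\in D$, $P_D(x)=N(x)\setminus N[D\setminus\{x\}]$ is the set of private neighbors of $x$. *)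

(* Defs.v *)
From mathcomp Require Import all_boot.
Set Implicit Arguments. Unset Strict Implicit. Unset Printing Implicit Defensive.

Definition simple_graph (T : finType) (e : rel T) : Prop :=
  symmetric e /\ irreflexive e.

Definition onbhd (T : finType) (e : rel T) (x : T) : {set T} := [set y | e x y].
Definition cnbhd (T : finType) (e : rel T) (x : T) : {set T} := x |: onbhd e x.
Definition cnbhdS (T : finType) (e : rel T) (S : {set T}) : {set T} :=
  \bigcup_(x in S) cnbhd e x.

Definition dominating (T : finType) (e : rel T) (D : {set T}) : Prop :=
  cnbhdS e D = setT.

Definition minimal_dominating (T : finType) (e : rel T) (D : {set T}) : Prop :=
  dominating e D /\ forall D' : {set T}, D' \proper D -> ~ dominating e D'.

Definition private_nbrs (T : finType) (e : rel T) (D : {set T}) (x : T) : {set T} :=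
  onbhd e x :\: cnbhdS e (D :\ x).

(* G is a line graph: G is isomorphic to L(H) for some finite simple graph H.
   f sends each vertex of G to an edge {a,b} of H, bijectively onto E(H),
   and adjacency in G is "distinct edges sharing an endpoint". *)
Definition line_graph (T : finType) (e : rel T) : Prop :=
  exists (V : finType) (h : rel V) (f : T -> {set V}),
    [/\ simple_graph h,
        injective f,
        (forall x, exists a b, h a b /\ f x = [set a; b]),
        (forall a b, h a b -> exists x, f x = [set a; b]) &
        (forall x y, e x y = (x != y) && (f x :&: f y != set0))].

(* Main.v *)
Require Import Defs.
From mathcomp Require Import all_boot.

Lemma key (V : finType) (a b : V) (B C D : {set V}) :
  [set a; b] :&: B != set0 -> [set a; b] :&: C != set0 ->
  [set a; b] :&: D != set0 -> B :&: D = set0 -> C :&: D = set0 ->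
  B :&: C != set0.
Proof.
move=> /set0Pn [p] /setIP [Hp pB] /set0Pn [q] /setIP [Hq qC]
  /set0Pn [r] /setIP [Hr rD] BD CD.
have npr : p != r.
  apply/eqP => E; subst r.
  by have := in_set0 p; rewrite -BD inE pB rD.
have nqr : q != r.
  apply/eqP => E; subst r.
  by have := in_set0 q; rewrite -CD inE qC rD.
have pq : p = q.
  move: Hp Hq Hr npr nqr; rewrite !inE.
  by case/orP=>/eqP->; case/orP=>/eqP->; case/orP=>/eqP->;
     rewrite ?eqxx.
apply/set0Pn; exists p; rewrite inE pB; by rewrite pq.
Qed.

Theorem lemma5 (T : finType) (e : rel T) (D : {set T}) (v u : T)
    (z : T -> T) :
  simple_graph e ->
  line_graph e ->
  minimal_dominating e D ->
  v \in D ->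
  onbhd e v :&: D = set0 ->
  u \in onbhd e v ->
  (forall x, x \in private_nbrs e D v :\: cnbhd e u ->
     z x \in onbhd e x :\: cnbhd e v) ->
  let X := private_nbrs e D v :\: cnbhd e u in
  let U := cnbhd e u :|:
           \bigcup_(x in X) ((cnbhd e x :\: cnbhd e v) :|: [set x]) in
  U \subset cnbhdS e (u |: (z @: X)).
Proof.
move=> [esym eirr] [V [h [f [_ _ fe _ ef]]]] _ _ _ _ Hz; cbv zeta.
apply/subsetP => w; rewrite in_setU => /orP [Hu | /bigcupP [x Hx Hw]].
  by apply/bigcupP; exists u => //; rewrite setU11.
have := Hz x Hx; rewrite !inE negb_or => /andP [/andP [nzv nezv] exz].
have Hxv : e v x.
  by move: Hx; rewrite /private_nbrs !inE => /andP [_ /andP [_ ->]].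
apply/bigcupP; exists (z x).
  by rewrite setU1r //; apply: imset_f.
move: Hw; rewrite !inE negb_or.
case: (eqVneq w x) => [->|nwx] /=; first by move=> _; rewrite esym exz orbT.
rewrite orbF => /andP [/andP [nwv newv] exw].
case: (eqVneq w (z x)) => [->|nwz] /=; first by [].
rewrite ef eq_sym nwz /=.
have [a [b [_ fx]]] := fe x.
apply: (@key V a b _ _ (f v)); rewrite -?fx.
- by move: exz; rewrite ef => /andP [].
- by move: exw; rewrite ef => /andP [].
- by move: Hxv; rewrite ef setIC => /andP [].
- by apply/eqP; move: nezv; rewrite ef negb_and negbK eq_sym (negbTE nzv) /= setIC negbK.
- by apply/eqP; move: newv; rewrite ef negb_and negbK eq_sym (negbTE nwv) /= setIC negbK.
Qed.
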